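(* Let $N\ge 1$ and $S_1,\dots,S_N\ge 1$. Consider an $S_1\times\cdots\times S_N$-setting $N$-partite correlation experiment in which party $n$ performs measurements $s_n\in\{1,\dots,S_n\}$ with outcomes $\lambda_n^{(s_n)}$ in a measurable space $\Lambda_n^{(s_n)}$ (of any type, discrete or continuous), described by joint probability distributions $P_{(s_1,\dots,s_N)}$ on $\Lambda_1^{(s_1)}\times\cdots\times\Lambda_N^{(s_N)}$, and suppose the experiment admits an LHV model (conditional or unconditional). Write $\lambda_n=(\lambda_n^{(1)},\dots,\lambda_n^{(S_n)})$ and $\Lambda_n=\Lambda_n^{(1)}\times\cdots\times\Lambda_n^{(S_n)}$. (i) For any collection $\{\Psi_{(s_1,\dots,s_N)}\}$ of bounded measurable real-valued functions, $\Psi_{(s_1,\dots,s_N)}$ defined on $\Lambda_1^{(s_1)}\times\cdots\times\Lambda_N^{(s_N)}$, the following tight linear LHV constraint holds: $$\inf_{\lambda_1\in\Lambda_1,\dots,\lambda_N\in\Lambda_N}\sum_{s_1,\dots,s_N}\Psi_{(s_1,\dots,s_N)}(\lambda_1^{(s_1)},\dots,\lambda_N^{(s_N)})\le\sum_{s_1,\dots,s_N}\big\langle\Psi_{(s_1,\dots,s_N)}(\lambda_1^{(s_1)},\dots,\lambda_N^{(s_N)})\big\rangle_{LHV}\le\sup_{\lambda_1\in\Lambda_1,\dots,\lambda_N\in\Lambda_N}\sum_{s_1,\dots,s_N}\Psi_{(s_1,\dots,s_N)}(\lambda_1^{(s_1)},\dots,\lambda_N^{(s_N)}).$$ (ii)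 In particular, for any bounded measurable real-valued functions $\phi_n^{(s_n)}$ on $\Lambda_n^{(s_n)}$ (all $s_n$, $n$) and any real coefficients $\gamma_{(s_1,\dots,s_N)}$, the tight linear LHV constraint $$\inf_{\xi_1\in\Phi_1,\dots,\xi_N\in\Phi_N}F_N^{(\gamma)}(\xi_1,\dots,\xi_N)\le\sum_{s_1,\dots,s_N}\gamma_{(s_1,\dots,s_N)}\big\langle\phi_1^{(s_1)}(\lambda_1^{(s_1)})\cdots\phi_N^{(s_N)}(\lambda_N^{(s_N)})\big\rangle_{LHV}\le\sup_{\xi_1\in\Phi_1,\dots,\xi_N\in\Phi_N}F_N^{(\gamma)}(\xi_1,\dots,\xi_N)$$ holds, where $F_N^{(\gamma)}(\xi_1,\dots,\xi_N)=\sum_{s_1,\dots,s_N}\gamma_{(s_1,\dots,s_N)}\,\xi_1^{(s_1)}\cdots\xi_N^{(s_N)}$ is the $N$-linear form of vectors $\xi_n=(\xi_n^{(1)},\dots,\xi_n^{(S_n)})\in\mathbb{R}^{S_n}$, and $\Phi_n=\{\xi_n\in\mathbb{R}^{S_n}:\ \xi_n^{(s_n)}=\phi_n^{(s_n)}(\lambda_n^{(s_n)}),\ \lambda_n^{(s_n)}\in\Lambda_n^{(s_n)},\ s_n=1,\dots,S_n\}$.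
   Context: All sums over $s_n$ range over $1,\dots,S_n$. For a joint measurement $(s_1,\dots,s_N)$ and a bounded measurable real function $\Psi$, $\langle\Psi(\lambda_1^{(s_1)},\dots,\lambda_N^{(s_N)})\rangle=\int\Psi\,dP_{(s_1,\dots,s_N)}$; the subscript LHV indicates the experiment admits an LHV model. The experiment admitting an LHV model (conditional or unconditional) is characterized by the existence of a probability measure $\mu$ on $\Lambda_1\times\cdots\times\Lambda_N$ (joint distribution of all outcomes of all measurements at all sites) such that every $P_{(s_1,\dots,s_N)}$ is the marginal of $\mu$ on the coordinates $(\lambda_1^{(s_1)},\dots,\lambda_N^{(s_N)})$. A linear LHV constraint is called tight if, within the class of experiments (with the given outcome sets) admitting an LHV model, its bounds cannot be improved. *)

(* Defs.v *)
From HB Require Import structures.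
From mathcomp Require Import all_boot all_order all_algebra.
From mathcomp Require Import all_classical all_reals all_analysis.
Set Implicit Arguments.
Unset Strict Implicit.
Unset Printing Implicit Defensive.
Import Order.TTheory GRing.Theory Num.Theory.
Local Open Scope classical_set_scope.
Local Open Scope ring_scope.

Section dprod.
Variables (I : finType) (d : I -> measure_display)
          (T : forall i, measurableType (d i)).

Definition dprod_cylinders : set (set (forall i, T i)) :=
  [set A | exists i (B : set (T i)), measurable B /\ A = (fun x => x i) @^-1` B].

Definition dprodM := g_sigma_algebraType dprod_cylinders.
End dprod.

(* Lam n k is the outcome space Lambda_n^{(k)} of measurement k of      *)
(* party n (parties and settings indexed from 0).                       *)
Section experiment.
Unset Implicit Arguments.
Variables (R : realType) (N : nat) (S : 'I_N -> nat)
  (d : forall n : 'I_N, 'I_(S n) -> measure_display)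
  (Lam : forall (n : 'I_N) (k : 'I_(S n)), measurableType (d n k)).
Set Implicit Arguments.

Definition setting := {dffun forall n : 'I_N, 'I_(S n)}.

Definition jointSpace (s : setting) := dprodM (fun n : 'I_N => Lam n (s n)).

Definition partySpace (n : 'I_N) := dprodM (fun k : 'I_(S n) => Lam n k).

Definition allSpace := dprodM partySpace.

Definition marg (s : setting) (l : allSpace) : jointSpace s :=
  fun n => l n (s n).

Definition experiment := forall s : setting, probability (jointSpace s) R.

Definition admits_LHV (P : experiment) : Prop :=
  exists mu : probability allSpace R,
    forall (s : setting) (A : set (jointSpace s)),
      measurable A -> P s A = mu (marg s @^-1` A).

Definition expect (P : experiment) (s : setting) (f : jointSpace s -> R) : R :=
  Rintegral (P s) setT f.

End experiment.

Arguments expect {R N S d Lam} P s f.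
Arguments marg {N S d Lam} s l.

(* Main.v *)
Require Import Defs.
From HB Require Import structures.
From mathcomp Require Import all_boot all_order all_algebra.
From mathcomp Require Import all_classical all_reals all_analysis.
Import Order.TTheory GRing.Theory Num.Theory.
Import numFieldNormedType.Exports.
Set Implicit Arguments.
Unset Strict Implicit.
Local Open Scope classical_set_scope.
Local Open Scope ring_scope.

Section bm.
Context d (T : measurableType d) (R : realType).

Definition bm (f : T -> R) := measurable_fun setT f /\ exists M, forall x, `|f x| <= M.

Lemma bm_of_bounded (f : T -> R) : measurable_fun setT f -> bounded_fun f -> bm f.
Proof.
move=> mf bf; split=> //.
have [M _ hM] := ex_strict_bound_gt0 bf.
by exists M => x; apply/ltW/hM.
Qed.

Lemma bm_bounded (f : T -> R) : bm f -> [bounded f x | x in setT].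
Proof.
case=> _ [M hM]; exists M; split; first exact: num_real.
by move=> y My x _; apply: le_trans (hM x) (ltW My).
Qed.

Lemma bm_cst (c : R) : bm (fun=> c).
Proof. by split; [exact: measurable_cst | exists `|c|]. Qed.

Lemma bm_add (f g : T -> R) : bm f -> bm g -> bm (fun x => f x + g x).
Proof.
move=> [mf [M hM]] [mg [K hK]]; split; first exact: measurable_realfun.measurable_funD.
exists (M + K) => x; apply: le_trans (ler_normD _ _) _; exact: lerD.
Qed.

Lemma bm_mul (f g : T -> R) : bm f -> bm g -> bm (fun x => f x * g x).
Proof.
move=> [mf [M hM]] [mg [K hK]]; split; first exact: measurable_realfun.measurable_funM.
exists (M * K) => x; rewrite normrM; apply: ler_pM => //.
Qed.

Lemma bm_sum I (r : seq I) (f : I -> T -> R) :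
  (forall i, bm (f i)) -> bm (fun x => \sum_(i <- r) f i x).
Proof.
move=> hf; elim: r => [|i r ih].
  by under eq_fun do rewrite big_nil; exact: bm_cst.
by under eq_fun do rewrite big_cons; exact: bm_add.
Qed.

Lemma bm_prod I (r : seq I) (f : I -> T -> R) :
  (forall i, bm (f i)) -> bm (fun x => \prod_(i <- r) f i x).
Proof.
move=> hf; elim: r => [|i r ih].
  by under eq_fun do rewrite big_nil; exact: bm_cst.
by under eq_fun do rewrite big_cons; exact: bm_mul.
Qed.

Lemma bm_integrable (mu : probability T R) (f : T -> R) : bm f -> mu.-integrable setT (EFin \o f).
Proof.
move=> hf; apply: measurable_bounded_integrable => //.
- by apply: (@le_lt_trans _ _ 1%E); [exact: probability_le1 | exact: ltry].
- by case: hf.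
- exact: bm_bounded.
Qed.

Lemma Rintegral_sum (mu : probability T R) I (r : seq I) (f : I -> T -> R) :
  (forall i, bm (f i)) ->
  Rintegral mu setT (fun x => \sum_(i <- r) f i x) = \sum_(i <- r) Rintegral mu setT (f i).
Proof.
move=> hf; elim: r => [|i r ih].
  under eq_Rintegral do rewrite big_nil.
  by rewrite big_nil Rintegral_cst // mul0r.
under eq_Rintegral do rewrite big_cons.
rewrite big_cons RintegralD //; first by rewrite ih.
- exact: bm_integrable.
- by apply: bm_integrable; exact: bm_sum.
Qed.

End bm.

Lemma bm_comp d (T : measurableType d) (R : realType) d' (U : measurableType d') (g : U -> T) (f : T -> R) :
  measurable_fun setT g -> bm f -> bm (f \o g).
Proof.
move=> mg [mf [M hM]]; split; first exact: measurableT_comp.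
by exists M => x; exact: hM.
Qed.



Section exp.
Unset Implicit Arguments.
Variables (R : realType) (N : nat) (S : 'I_N -> nat)
  (d : forall n : 'I_N, 'I_(S n) -> measure_display)
  (Lam : forall (n : 'I_N) (k : 'I_(S n)), measurableType (d n k)).

Set Implicit Arguments.
Lemma meas_proj (s : setting S) (n : 'I_N) :
  measurable_fun setT (fun x : jointSpace Lam s => x n).
Proof.
move=> _ B mB; rewrite setTI; apply: sub_sigma_algebra; by exists n, B.
Qed.

Lemma meas_marg (s : setting S) :
  measurable_fun setT (marg s : allSpace Lam -> jointSpace Lam s).
Proof.
have h := (@measurability _ _ (allSpace Lam) (jointSpace Lam s) setT (marg s) (@dprod_cylinders _ _ (fun n => Lam n (s n)))).
have h1 := h erefl. apply: h1.
move=> _ [_ [n [B [mB ->]]] <-]; rewrite setTI.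
apply: sub_sigma_algebra.
exists n, ((fun y : partySpace Lam n => y (s n)) @^-1` B); split => //.
by apply: sub_sigma_algebra; exists (s n), B.
Qed.

Lemma E_LHV (Psi : forall s : setting S, jointSpace Lam s -> R)
  (hPsi : forall s, bm (Psi s)) (Q : experiment R Lam)
  (mu : probability (allSpace Lam) R)
  (hQ : forall s A, measurable A -> Q s A = mu (marg s @^-1` A)) :
  \sum_(s : setting S) expect Q s (Psi s) =
  Rintegral mu setT (fun l => \sum_(s : setting S) Psi s (marg s l)).
Proof.
have hc : forall s, bm (Psi s \o marg s).
  move=> s; apply: bm_comp; [exact: meas_marg | exact: hPsi].
rewrite (@Rintegral_sum _ _ _ mu _ _ (fun s => Psi s \o marg s) hc).
apply: eq_bigr => s _; rewrite /expect /Rintegral; congr fine.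
have H := @integral_pushforward _ _ _ _ R (marg s) (@meas_marg s) mu setT (EFin \o Psi s).
rewrite preimage_setT in H.
apply: (eq_trans _ (H _ _ _)).
- apply: eq_measure_integral; [exact: (@meas_marg s) | move=> ? A mA _; exact: hQ].
- by apply/measurable_realfun.measurable_EFinP; case: (hPsi s).
- exact: (bm_integrable mu (hc s)).
- exact: measurableT.
Qed.


Lemma dirac_exp (l : allSpace Lam) : exists Q : experiment R Lam,
  (forall s A, measurable A -> Q s A = (\d_l : probability (allSpace Lam) R) (marg s @^-1` A)).
Proof.
exists (fun s => (\d_(marg s l) : probability (jointSpace Lam s) R)) => s A mA /=.
rewrite !diracE; have [h|h] := pselect (A (marg s l)).
- by rewrite !mem_set.
- by rewrite !memNset.
Qed.

Lemma Rintegral_dirac_bm (l : allSpace Lam) (V : allSpace Lam -> R) : bm V ->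
  Rintegral (\d_l : probability (allSpace Lam) R) setT V = V l.
Proof.
move=> [mV _]; rewrite /Rintegral integral_dirac //.
- by rewrite diracT mul1e.
- exact/measurable_realfun.measurable_EFinP.
Qed.

Lemma part_i (Psi : forall s : setting S, jointSpace Lam s -> R)
  (hPsi : forall s, bm (Psi s)) (P : experiment R Lam) (hP : admits_LHV P) :
 let V := fun l : allSpace Lam => \sum_(s : setting S) Psi s (marg s l) in
 let E := fun Q : experiment R Lam => \sum_(s : setting S) expect Q s (Psi s) in
 (inf (range V) <= E P /\ E P <= sup (range V)) /\
 (forall c : R, (forall Q, admits_LHV Q -> c <= E Q) -> c <= inf (range V)) /\
 (forall c : R, (forall Q, admits_LHV Q -> E Q <= c) -> sup (range V) <= c).
Proof.
move=> V E.
have hc : forall s, bm (Psi s \o marg s).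
  move=> s; apply: bm_comp; [exact: meas_marg | exact: hPsi].
have hV : bm V by apply: bm_sum => s; exact: (hc s).
have [M hM] := hV.2.
have hlb : has_lbound (range V).
  by exists (- M) => _ [l _ <-]; rewrite lerNl; apply: le_trans (hM l); rewrite -normrN ler_norm.
have hub : has_ubound (range V).
  by exists M => _ [l _ <-]; apply: le_trans (hM l); exact: ler_norm.
have hne : range V !=set0 by exists (V point), point.
have EQ : forall (Q : experiment R Lam) (mu : probability (allSpace Lam) R),
    (forall s A, measurable A -> Q s A = mu (marg s @^-1` A)) ->
    E Q = Rintegral mu setT V.
  by move=> Q mu hQ; rewrite /E (E_LHV hPsi hQ).
have Edirac : forall l, exists Q, admits_LHV Q /\ E Q = V l.
  move=> l; have [Q hQ] := dirac_exp l; exists Q; split.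
  - by exists (\d_l : probability (allSpace Lam) R).
  - by rewrite (EQ _ _ hQ) Rintegral_dirac_bm.
have cst1 : forall (mu : probability (allSpace Lam) R) (c : R), Rintegral mu setT (fun=> c) = c.
  move=> mu c; rewrite Rintegral_cst // [fine _](_ : _ = 1) ?mulr1 //.
  exact: (congr1 fine (probability_setT mu)).
split; [|split].
- have [mu hmu] := hP; rewrite (EQ _ _ hmu); split.
  + rewrite -[X in X <= _](cst1 mu); apply: le_Rintegral => //.
    * by apply: bm_integrable; exact: bm_cst.
    * exact: (bm_integrable mu hV).
    * by move=> l _; apply: ge_inf => //; exists l.
  + rewrite -[X in _ <= X](cst1 mu); apply: le_Rintegral => //.
    * exact: (bm_integrable mu hV).
    * by apply: bm_integrable; exact: bm_cst.
    * by move=> l _; apply: ub_le_sup => //; exists l.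
- move=> c hc'; apply: lb_le_inf => // _ [l _ <-].
  by have [Q [hQ <-]] := Edirac l; apply: hc'.
- move=> c hc'; apply: ge_sup => // _ [l _ <-].
  by have [Q [hQ <-]] := Edirac l; apply: hc'.
Qed.

End exp.

Unset Implicit Arguments.
Theorem theorem1 (R : realType) (N : nat) (S : 'I_N -> nat)
  (d : forall n : 'I_N, 'I_(S n) -> measure_display)
  (Lam : forall (n : 'I_N) (k : 'I_(S n)), measurableType (d n k))
  (hN : (1 <= N)%N) (hS : forall n, (1 <= S n)%N)
  (P : experiment R Lam) (hP : admits_LHV P) :
  (* (i) *)
  (forall Psi : forall s : setting S, jointSpace Lam s -> R,
     (forall s, measurable_fun setT (Psi s)) ->
     (forall s, bounded_fun (Psi s)) ->
     let V := fun l : allSpace Lam => \sum_(s : setting S) Psi s (marg s l) in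
     let E := fun Q : experiment R Lam => \sum_(s : setting S) expect Q s (Psi s) in
     (inf (range V) <= E P /\ E P <= sup (range V)) /\
     (* tightness: the bounds cannot be improved within LHV experiments *)
     (forall c : R, (forall Q, admits_LHV Q -> c <= E Q) -> c <= inf (range V)) /\
     (forall c : R, (forall Q, admits_LHV Q -> E Q <= c) -> sup (range V) <= c)) /\
  (* (ii) *)
  (forall (phi : forall (n : 'I_N) (k : 'I_(S n)), Lam n k -> R)
          (gamma : setting S -> R),
     (forall n k, measurable_fun setT (phi n k)) ->
     (forall n k, bounded_fun (phi n k)) ->
     let F := fun xi : forall n : 'I_N, 'I_(S n) -> R =>
       \sum_(s : setting S) gamma s * \prod_(n < N) xi n (s n) in
     let Phi := fun n : 'I_N => [set xi : 'I_(S n) -> R |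
       exists l : forall k : 'I_(S n), Lam n k, forall k, xi k = phi n k (l k)] in
     let Fvals := [set F xi | xi in [set xi | forall n, Phi n (xi n)]] in
     let E := fun Q : experiment R Lam => \sum_(s : setting S) gamma s *
        expect Q s (fun x : jointSpace Lam s => \prod_(n < N) phi n (s n) (x n)) in
     (inf Fvals <= E P /\ E P <= sup Fvals) /\
     (forall c : R, (forall Q, admits_LHV Q -> c <= E Q) -> c <= inf Fvals) /\
     (forall c : R, (forall Q, admits_LHV Q -> E Q <= c) -> sup Fvals <= c)).

Proof.
split.
- move=> Psi mPsi bPsi.
  exact: (part_i (fun s => bm_of_bounded (mPsi s) (bPsi s)) hP).
- move=> phi gamma mphi bphi F Phi Fvals E.
  pose Psi := fun (s : setting S) (x : jointSpace Lam s) =>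
    gamma s * \prod_(n < N) phi n (s n) (x n).
  have hprod : forall s, bm (fun x : jointSpace Lam s => \prod_(n < N) phi n (s n) (x n)).
    move=> s; apply: bm_prod => n.
    apply: (@bm_comp _ _ _ _ _ (fun x : jointSpace Lam s => x n) (phi n (s n))).
    + exact: meas_proj.
    + exact: bm_of_bounded.
  have hPsi : forall s, bm (Psi s).
    by move=> s; apply: bm_mul; [exact: bm_cst | exact: hprod].
  have eE : E = fun Q => \sum_(s : setting S) expect Q s (Psi s).
    apply: funext => Q; rewrite /E; apply: eq_bigr => s _.
    rewrite /expect /Psi RintegralZl //.
    exact: (bm_integrable (Q s) (hprod s)).
  have eF : Fvals = range (fun l : allSpace Lam => \sum_(s : setting S) Psi s (marg s l)).
    apply/seteqP; split.
    + move=> _ [xi hxi <-].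
      exists (fun n => proj1_sig (cid (hxi n))) => //.
      rewrite /F /Psi; apply: eq_bigr => s _; congr (_ * _).
      apply: eq_bigr => n _.
      by rewrite (proj2_sig (cid (hxi n))).
    + move=> _ [l _ <-].
      exists (fun n k => phi n k (l n k)); first by move=> n; exists (l n).
      by [].
  rewrite eF eE.
  exact: (part_i hPsi hP).
Qed.
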